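(* Let $n\ge2$, $\beta_n=2^{1/(n-1)}$, and $p\in(0,1/2)$ with $p\ge\frac{\beta_n-1}{2\beta_n-1}$. Let $X_1,\dots,X_n$ be i.i.d. with $P(X_i=1)=P(X_i=-1)=p$, $P(X_i=0)=1-2p$. Then the optimal probability, over stopping times $\tau\in\{1,\dots,n\}$ with respect to the natural filtration, that either $X_\tau=1$ and $X_i\ne1$ for all $i>\tau$, or $X_\tau=-1$ and $X_i\ne-1$ for all $i>\tau$, is at least $2(2\beta_n-1)^{1-n}\ge 1/2$. *)

(* Defs.v *)
From Stdlib Require Import Reals ZArith List.
Import ListNotations.
Open Scope R_scope.

Fixpoint outcomes (n : nat) : list (list Z) :=
  match n with
  | O => [nil]
  | S m => flat_map (fun x => map (cons x) (outcomes m)) [(-1)%Z; 0%Z; 1%Z]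
  end.

Definition letter_weight (p : R) (x : Z) : R :=
  if Z.eqb x 0 then 1 - 2 * p else p.

Definition weight (p : R) (w : list Z) : R :=
  fold_right (fun x acc => letter_weight p x * acc) 1 w.

(* A stopping rule adapted to the natural filtration: [stop h] decides
   whether to stop at time k = length h having observed h = (X_1,...,X_k).
   The induced stopping time is the first k with [stop (X_1..X_k)] = true,
   and n if there is none (so tau ranges in {1,...,n}).  Every stopping time
   with values in {1,...,n} arises this way. *)
Fixpoint tau_aux (stop : list Z -> bool) (hist rest : list Z) : nat :=
  match rest with
  | nil => length hist
  | x :: r =>
      let h := hist ++ [x] in
      match r with
      | nil => length h
      | _ => if stop h then length h else tau_aux stop h r
      end
  end.

Definition tau (stop : list Z -> bool) (w : list Z) : nat := tau_aux stop nil w.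

Definition wins (w : list Z) (t : nat) : bool :=
  let x := nth (t - 1) w 0%Z in
  negb (Z.eqb x 0) && negb (existsb (Z.eqb x) (skipn t w)).

Definition win_prob (p : R) (n : nat) (stop : list Z -> bool) : R :=
  fold_right Rplus 0
    (map (fun w => if wins w (tau stop w) then weight p w else 0) (outcomes n)).

Definition beta (n : nat) : R := Rpower 2 (/ INR (n - 1)).

(* Main.v *)
Require Import Defs.
From Stdlib Require Import Reals ZArith List Lia Lra Psatz.
Import ListNotations.
Open Scope R_scope.

Definition E (p : R) (n : nat) (f : list Z -> bool) : R :=
  fold_right Rplus 0 (map (fun w => if f w then weight p w else 0) (outcomes n)).
Arguments E : simpl never.

Lemma sum_app (l1 l2 : list R) :
  fold_right Rplus 0 (l1 ++ l2) = fold_right Rplus 0 l1 + fold_right Rplus 0 l2.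
Proof. induction l1; simpl; [ring | rewrite IHl1; ring]. Qed.

Lemma sum_cons_map p (f : list Z -> bool) (x : Z) (l : list (list Z)) :
  fold_right Rplus 0 (map (fun w => if f w then weight p w else 0) (map (cons x) l))
  = letter_weight p x * fold_right Rplus 0 (map (fun w => if f (x :: w) then weight p w else 0) l).
Proof.
  induction l; simpl; [ring|]. rewrite IHl. destruct (f (x :: a)); simpl; ring.
Qed.

Lemma E_cons p n f :
  E p (S n) f = p * E p n (fun w => f ((-1)%Z :: w)) + (1 - 2*p) * E p n (fun w => f (0%Z :: w))
     + p * E p n (fun w => f (1%Z :: w)).
Proof.
  unfold E. simpl outcomes. simpl flat_map. rewrite !map_app, !sum_app, !sum_cons_map.
  unfold letter_weight; simpl. ring.
Qed.

Lemma outcomes_length n w : In w (outcomes n) -> length w = n.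
Proof.
  revert w; induction n; simpl; intros w H.
  - destruct H as [<-|[]]; reflexivity.
  - rewrite !in_app_iff in H.
    destruct H as [H|[H|[H|[]]]]; apply in_map_iff in H;
    destruct H as [u [<- Hu]]; simpl; rewrite (IHn u Hu); reflexivity.
Qed.

Lemma E_ext p n f g : (forall w, length w = n -> f w = g w) -> E p n f = E p n g.
Proof.
  intros H. unfold E. f_equal. apply map_ext_in. intros w Hw.
  rewrite (H w (outcomes_length n w Hw)). reflexivity.
Qed.

Lemma E_0 p f : E p 0 f = if f nil then 1 else 0.
Proof. unfold E. simpl. destruct (f nil); simpl; ring. Qed.

Lemma E_app p a b f g :
  (forall pre suf, length pre = a -> length suf = b -> f (pre ++ suf) = g suf) ->
  E p (a + b) f = E p b g.
Proof.
  revert f; induction a; intros f H.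
  - simpl. apply E_ext. intros w Hw. apply (H nil w); auto.
  - simpl (S a + b)%nat. rewrite E_cons.
    rewrite !(IHa (fun w => f (_ :: w))). ring.
    all: intros pre suf Hp Hs; apply (H (_ :: pre)); simpl; auto.
Qed.

Lemma E_false p m : E p m (fun _ => false) = 0.
Proof. unfold E. induction (outcomes m); simpl; auto. rewrite IHl; ring. Qed.

Lemma E_none p m x : (x = 1%Z \/ x = (-1)%Z) ->
  E p m (fun r => negb (existsb (Z.eqb x) r)) = (1 - p) ^ m.
Proof.
  intros Hx. induction m.
  - rewrite E_0. simpl. ring.
  - rewrite E_cons. simpl existsb.
    destruct Hx as [-> | ->]; simpl Z.eqb; simpl negb; simpl orb.
    all: rewrite IHm, E_false; simpl; ring.
Qed.

Fixpoint fnz (w : list Z) : nat :=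
  match w with
  | nil => O
  | x :: r => match r with
              | nil => 1%nat
              | _ => if Z.eqb x 0 then S (fnz r) else 1%nat
              end
  end.

Definition Wf (w : list Z) : bool := wins w (fnz w).

Lemma W_cons x r : Wf (x :: r) = if Z.eqb x 0 then Wf r else negb (existsb (Z.eqb x) r).
Proof.
  unfold Wf. destruct (Z.eqb x 0) eqn:Hx.
  - apply Z.eqb_eq in Hx; subst x. destruct r as [|y r'].
    + reflexivity.
    + change (fnz (0%Z :: y :: r')) with (S (fnz (y :: r'))).
      assert (exists k, fnz (y :: r') = S k) as [k Hk].
      { simpl. destruct r'; [eauto|]. destruct (Z.eqb y 0); eauto. }
      rewrite Hk. unfold wins. replace (S (S k) - 1)%nat with (S k) by lia.
      replace (S k - 1)%nat with k by lia. reflexivity.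
  - assert (fnz (x :: r) = 1%nat) as ->.
    { simpl. destruct r; [reflexivity|]. rewrite Hx. reflexivity. }
    unfold wins. simpl. rewrite Hx. reflexivity.
Qed.

Lemma E_W p m : E p m Wf = 2 * ((1 - p) ^ m - (1 - 2*p) ^ m).
Proof.
  induction m.
  - rewrite E_0. simpl. ring.
  - rewrite E_cons.
    rewrite (E_ext p m (fun w => Wf ((-1)%Z :: w)) (fun r => negb (existsb (Z.eqb (-1)) r)))
      by (intros; rewrite W_cons; reflexivity).
    rewrite (E_ext p m (fun w => Wf (0%Z :: w)) Wf)
      by (intros; rewrite W_cons; reflexivity).
    rewrite (E_ext p m (fun w => Wf (1%Z :: w)) (fun r => negb (existsb (Z.eqb 1) r)))
      by (intros; rewrite W_cons; reflexivity).
    rewrite !E_none by auto. rewrite IHm. simpl. ring.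
Qed.

Definition stop_s (s : nat) (h : list Z) : bool :=
  Nat.leb s (length h) && negb (Z.eqb (last h 0%Z) 0).

Lemma tau_tail s suf : forall hist, (s - 1 <= length hist)%nat ->
  tau_aux (stop_s s) hist suf = (length hist + fnz suf)%nat.
Proof.
  induction suf as [|x r IH]; intros hist Hh.
  - simpl. lia.
  - simpl tau_aux. destruct r as [|y r'].
    + rewrite length_app. simpl. lia.
    + unfold stop_s at 1. rewrite last_last, length_app.
      replace (Nat.leb s (length hist + length [x])) with true
        by (symmetry; apply Nat.leb_le; simpl; lia).
      simpl andb. change (fnz (x :: y :: r')) with
        (if Z.eqb x 0 then S (fnz (y :: r')) else 1%nat).
      destruct (Z.eqb x 0); simpl negb; cbv iota.
      * rewrite IH by (rewrite length_app; simpl; lia). rewrite length_app. simpl. lia.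
      * simpl. lia.
Qed.

Lemma tau_pre s pre : forall hist suf, suf <> nil -> (length hist + length pre < s)%nat ->
  tau_aux (stop_s s) hist (pre ++ suf) = tau_aux (stop_s s) (hist ++ pre) suf.
Proof.
  induction pre as [|y pre' IH]; intros hist suf Hs Hl.
  - rewrite app_nil_r. reflexivity.
  - simpl app. simpl tau_aux.
    destruct (pre' ++ suf) as [|z t] eqn:Ep.
    + apply app_eq_nil in Ep. tauto.
    + rewrite <- Ep.
      unfold stop_s at 1. rewrite length_app.
      replace (Nat.leb s (length hist + length [y])) with false
        by (symmetry; apply Nat.leb_gt; simpl in *; lia).
      simpl andb. cbv iota.
      rewrite IH by (auto; rewrite length_app; simpl in *; lia).
      rewrite <- app_assoc. reflexivity.
Qed.

Lemma skipn_shift (pre suf : list Z) k : skipn (length pre + k) (pre ++ suf) = skipn k suf.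
Proof. induction pre; simpl; auto. Qed.

Lemma wins_shift pre suf k : (1 <= k)%nat -> wins (pre ++ suf) (length pre + k) = wins suf k.
Proof.
  intros Hk. unfold wins. rewrite skipn_shift.
  replace (length pre + k - 1)%nat with (length pre + (k - 1))%nat by lia.
  rewrite app_nth2_plus. reflexivity.
Qed.

Lemma fnz_pos w : w <> nil -> (1 <= fnz w)%nat.
Proof.
  destruct w as [|x r]; [tauto|]. intros _. simpl. destruct r; [lia|]. destruct (Z.eqb x 0); lia.
Qed.

Lemma win_formula p a b : (1 <= b)%nat ->
  win_prob p (a + b) (stop_s (a + 1)) = 2 * ((1 - p) ^ b - (1 - 2*p) ^ b).
Proof.
  intros Hb. change (win_prob p (a + b) (stop_s (a + 1)))
    with (E p (a + b) (fun w => wins w (tau (stop_s (a + 1)) w))).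
  rewrite <- E_W. apply E_app. intros pre suf Hp Hs.
  assert (suf <> nil) by (intro E0; rewrite E0 in Hs; simpl in Hs; lia).
  unfold tau. rewrite tau_pre by (simpl; auto; lia). simpl app.
  rewrite tau_tail by lia. apply wins_shift. apply fnz_pos; auto.
Qed.
Fixpoint Ssum (k : nat) (u v : R) : R :=
  match k with O => 0 | S k' => u ^ k' + v * Ssum k' u v end.

Lemma Ssum_id k u v : u ^ k - v ^ k = (u - v) * Ssum k u v.
Proof.
  induction k; simpl; [ring|].
  transitivity ((u - v) * u ^ k + v * (u ^ k - v ^ k)); [ring|]. rewrite IHk; ring.
Qed.

Lemma Ssum_nonneg k u v : 0 <= u -> 0 <= v -> 0 <= Ssum k u v.
Proof.
  intros Hu Hv; induction k; simpl; [lra|].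
  apply Rplus_le_le_0_compat; [apply pow_le; auto | apply Rmult_le_pos; auto].
Qed.

Lemma Ssum_cmp j q q' r r' : 0 <= q -> 0 <= q' -> 0 <= r -> 0 <= r' -> q' * r <= q * r' ->
  q' ^ j * Ssum (S j) r r' <= r' ^ j * Ssum (S j) q q'.
Proof.
  intros Hq Hq' Hr Hr' H. induction j.
  - simpl. lra.
  - assert (A : (q' * r) ^ (S j) <= (q * r') ^ (S j)) by (apply pow_incr; split; nra).
    rewrite !Rpow_mult_distr in A.
    assert (B : q' * r' * (q' ^ j * Ssum (S j) r r') <= q' * r' * (r' ^ j * Ssum (S j) q q'))
      by (apply Rmult_le_compat_l; nra).
    replace (q' ^ S j * Ssum (S (S j)) r r') with
      (q' ^ S j * r ^ S j + q' * r' * (q' ^ j * Ssum (S j) r r')) by (simpl; ring).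
    replace (r' ^ S j * Ssum (S (S j)) q q') with
      (q ^ S j * r' ^ S j + q' * r' * (r' ^ j * Ssum (S j) q q')) by (simpl; ring).
    lra.
Qed.

Definition g (m : nat) (x : R) : R := (1 - x) ^ m - (1 - 2 * x) ^ m.

Lemma g_mono j p p' : 0 <= p -> p <= p' -> p' < 1/2 ->
  (1 - p') ^ j <= 2 * (1 - 2 * p') ^ j -> g (S j) p <= g (S j) p'.
Proof.
  intros H0 H1 H2 H3. unfold g.
  set (r := 1 - p). set (r' := 1 - p'). set (q := 1 - 2 * p). set (q' := 1 - 2 * p').
  fold r' q' in H3.
  assert (Er := Ssum_id (S j) r r'). assert (Eq := Ssum_id (S j) q q').
  assert (C := Ssum_cmp j q q' r r').
  assert (Hr'j : 0 < r' ^ j) by (apply pow_lt; unfold r'; lra).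
  assert (Sr := Ssum_nonneg (S j) r r'). assert (Sq := Ssum_nonneg (S j) q q').
  unfold r, r', q, q' in *.
  assert (C' : (1 - p') ^ j * Ssum (S j) (1 - p) (1 - p') <=
               (1 - p') ^ j * (2 * Ssum (S j) (1 - 2 * p) (1 - 2 * p'))).
  { assert (C0 : (1 - 2 * p') ^ j * Ssum (S j) (1 - p) (1 - p') <=
                 (1 - p') ^ j * Ssum (S j) (1 - 2 * p) (1 - 2 * p')) by (apply C; nra).
    assert (0 <= Ssum (S j) (1 - p) (1 - p')) by (apply Sr; lra).
    nra. }
  apply Rmult_le_reg_l in C'; auto.
  assert (0 <= Ssum (S j) (1 - 2*p) (1 - 2*p')) by (apply Sq; lra).
  nra.
Qed.

Lemma g_bal j x : (1 - x) ^ j = 2 * (1 - 2 * x) ^ j -> g (S j) x = g j x.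
Proof. intros H. unfold g. simpl. rewrite H. ring. Qed.

Lemma cond_from j p P : 0 <= p -> p <= P -> P < 1/2 -> (1 - P) ^ j = 2 * (1 - 2 * P) ^ j ->
  (1 - p) ^ j <= 2 * (1 - 2 * p) ^ j.
Proof.
  intros H0 H1 H2 H3.
  assert (A : ((1 - 2*P) * (1 - p)) ^ j <= ((1 - 2*p) * (1 - P)) ^ j)
    by (apply pow_incr; split; nra).
  rewrite !Rpow_mult_distr, H3 in A.
  assert (0 < (1 - 2*P) ^ j) by (apply pow_lt; lra).
  nra.
Qed.

Definition yy (j : nat) : R := Rpower 2 (/ INR j).
Definition Pt (j : nat) : R := (yy j - 1) / (2 * yy j - 1).

Lemma yy_gt1 j : (1 <= j)%nat -> 1 < yy j.
Proof.
  intros Hj. unfold yy. rewrite <- (Rpower_O 2) at 1 by lra. apply Rpower_lt; [lra|].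
  apply Rinv_0_lt_compat. apply lt_0_INR. lia.
Qed.

Lemma yy_pow j : (1 <= j)%nat -> yy j ^ j = 2.
Proof.
  intros Hj. assert (H1 := yy_gt1 j Hj).
  rewrite <- Rpower_pow by lra. unfold yy. rewrite Rpower_mult.
  rewrite Rinv_l by (apply not_0_INR; lia). apply Rpower_1; lra.
Qed.

Lemma Pt_q j : (1 <= j)%nat -> 1 - 2 * Pt j = / (2 * yy j - 1).
Proof. intros Hj. assert (H1 := yy_gt1 j Hj). unfold Pt. field. lra. Qed.

Lemma Pt_r j : (1 <= j)%nat -> 1 - Pt j = yy j * / (2 * yy j - 1).
Proof. intros Hj. assert (H1 := yy_gt1 j Hj). unfold Pt. field. lra. Qed.

Lemma Pt_range j : (1 <= j)%nat -> 0 < Pt j < 1/2.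
Proof.
  intros Hj. assert (H1 := yy_gt1 j Hj). assert (Hq := Pt_q j Hj).
  assert (0 < / (2 * yy j - 1)) by (apply Rinv_0_lt_compat; lra).
  assert (/ (2 * yy j - 1) < 1).
  { rewrite <- Rinv_1. apply Rinv_lt_contravar; lra. }
  lra.
Qed.

Lemma Pt_bal j : (1 <= j)%nat -> (1 - Pt j) ^ j = 2 * (1 - 2 * Pt j) ^ j.
Proof.
  intros Hj. rewrite Pt_r, Pt_q, Rpow_mult_distr, yy_pow by auto. reflexivity.
Qed.

Lemma Pt_mono j : (1 <= j)%nat -> Pt (S j) <= Pt j.
Proof.
  intros Hj. assert (H1 := yy_gt1 j Hj). assert (H2 := yy_gt1 (S j) ltac:(lia)).
  assert (Hle : yy (S j) <= yy j).
  { unfold yy. apply Rle_Rpower; [lra|]. apply Rinv_le_contravar.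
    apply lt_0_INR; lia. apply le_INR; lia. }
  assert (/ (2 * yy j - 1) <= / (2 * yy (S j) - 1)) by (apply Rinv_le_contravar; lra).
  assert (Hq := Pt_q j Hj). assert (Hq' := Pt_q (S j) ltac:(lia)). lra.
Qed.

Lemma find_m p k : (1 <= k)%nat -> Pt k <= p -> p < 1/2 ->
  exists m, (1 <= m <= k)%nat /\ g k (Pt k) <= g m p.
Proof.
  intros Hk Hp Hp2. induction k as [|k IH]; [lia|].
  destruct k as [|k].
  - exists 1%nat. split; [lia|]. assert (H := Pt_range 1 ltac:(lia)).
    apply g_mono; simpl; lra.
  - assert (HK := Pt_range (S k) ltac:(lia)). assert (HK2 := Pt_range (S (S k)) ltac:(lia)).
    assert (Hb := Pt_bal (S k) ltac:(lia)). assert (Hm := Pt_mono (S k) ltac:(lia)).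
    destruct (Rle_lt_dec (Pt (S k)) p) as [Hle|Hlt].
    + destruct (IH ltac:(lia) Hle) as [m [Hm1 Hm2]]. exists m. split; [lia|].
      eapply Rle_trans; [|exact Hm2]. rewrite <- (g_bal (S k) (Pt (S k))) by auto.
      apply g_mono; try rewrite Hb; lra.
    + exists (S (S k)). split; [lia|]. apply g_mono; try lra; [].
      apply (cond_from _ _ (Pt (S k))); lra.
Qed.

Lemma g_final j : (1 <= j)%nat -> g j (Pt j) = 1 / (2 * yy j - 1) ^ j.
Proof.
  intros Hj. unfold g. rewrite Pt_bal by auto. rewrite Pt_q by auto.
  rewrite pow_inv. unfold Rdiv. ring.
Qed.

Lemma second j : (1 <= j)%nat -> 1/2 <= 2 / (2 * yy j - 1) ^ j.
Proof.
  intros Hj. assert (H1 := yy_gt1 j Hj). assert (Hp := yy_pow j Hj).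
  assert (A : (2 * yy j - 1) ^ j <= (yy j ^ 2) ^ j) by (apply pow_incr; nra).
  rewrite <- pow_mult, Nat.mul_comm, pow_mult, Hp in A.
  assert (0 < (2 * yy j - 1) ^ j) by (apply pow_lt; lra).
  apply (Rmult_le_reg_r ((2 * yy j - 1) ^ j)); auto.
  replace (2 / (2 * yy j - 1) ^ j * (2 * yy j - 1) ^ j) with 2 by (field; lra). simpl in A. lra.
Qed.

Theorem mainTheorem10 (n : nat) (p : R) :
  (2 <= n)%nat ->
  0 < p -> p < 1 / 2 ->
  (beta n - 1) / (2 * beta n - 1) <= p ->
  (exists stop : list Z -> bool,
      2 / (2 * beta n - 1) ^ (n - 1) <= win_prob p n stop)
  /\ 1 / 2 <= 2 / (2 * beta n - 1) ^ (n - 1).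
Proof.
  intros Hn Hp0 Hp1 Hp2.
  change (beta n) with (yy (n - 1)) in *.
  change ((yy (n - 1) - 1) / (2 * yy (n - 1) - 1)) with (Pt (n - 1)) in Hp2.
  split.
  - destruct (find_m p (n - 1) ltac:(lia) Hp2 Hp1) as [m [Hm Hg]].
    exists (stop_s (n - m + 1)).
    assert (W := win_formula p (n - m) m ltac:(lia)).
    rewrite Nat.sub_add in W by lia. rewrite W.
    rewrite g_final in Hg by lia. unfold g in Hg. unfold Rdiv in *. lra.
  - apply second. lia.
Qed.
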